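(* Let $\mathbb A=(A_n)_{n\in\mathbb Z^+}$ be a sequence of invertible linear operators on $\mathbb R^d$ and $\mathcal S=\{\|\cdot\|_n;\ n\in\mathbb Z^+\}$ a sequence of norms such that there exist $K,a>0$ with $\|\mathcal A(m,n)x\|_m\le Ke^{a(m-n)}\|x\|_n$ and $\|\mathcal A(n,m)x\|_n\le Ke^{a(m-n)}\|x\|_m$ for all $m\ge n$, $x$. Let $\Sigma=\Sigma_{ED,\mathbb A,\mathcal S}$. Then $\Sigma$ is closed in $(0,\infty)$. Moreover, for every $r\in(0,\infty)\setminus\Sigma$ there is an open interval $I\ni r$ such that $S_r(n)=S_{r'}(n)$ for all $n\in\mathbb Z^+$ and all $r'\in I$.
   Context: $\mathbb Z^+=\{0,1,\dots\}$. $\mathcal A(m,n)=A_{m-1}\cdots A_n$ ($m>n$), $\mathrm{Id}$ ($m=n$), $A_m^{-1}\cdots A_{n-1}^{-1}$ ($m<n$). For $r>0$, $n\in\mathbb Z^+$: $S_r(n)=\{v\in\mathbb R^d:\ \sup_{m\ge n}r^{-(m-n)}\|\mathcal A(m,n)v\|_m<+\infty\}$. A sequence $(C_n)_{n\in\mathbb Z^+}$ with cocycle $\mathcal C$ admits a strong exponential dichotomy w.r.t. $\mathcal S$ if there exist $K>0$, $a\ge\lambda>0$ and projections $P_n$ with $C_nP_n=P_{n+1}C_n$ such that for $m\ge n$, $x$, $Q_m=\mathrm{Id}-P_m$: $\|\mathcal C(m,n)P_nx\|_m\le Ke^{-\lambda(m-n)}\|x\|_n$, $\|\mathcal C(n,m)Q_mx\|_n\le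 Ke^{-\lambda(m-n)}\|x\|_m$, $\|\mathcal C(m,n)x\|_m\le Ke^{a(m-n)}\|x\|_n$, $\|\mathcal C(n,m)x\|_n\le Ke^{a(m-n)}\|x\|_m$. $\Sigma_{ED,\mathbb A,\mathcal S}$: set of $\tau>0$ such that $(\tau^{-1}A_n)_{n\in\mathbb Z^+}$ does not admit a strong exponential dichotomy w.r.t. $\mathcal S$. *)

(* Defs.v *)
From HB Require Import structures.
From mathcomp Require Import all_boot all_order all_algebra.
From mathcomp Require Import classical_sets reals sequences exp.
Set Implicit Arguments. Unset Strict Implicit. Unset Printing Implicit Defensive.
Import Order.TTheory GRing.Theory Num.Theory.
Local Open Scope ring_scope.
Local Open Scope classical_set_scope.

Section Defs.
Variables (R : realType) (d : nat).

Definition is_norm (N : 'cV[R]_d -> R) : Prop :=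
  [/\ forall v, 0 <= N v,
      forall v, N v = 0 -> v = 0,
      forall (c : R) v, N (c *: v) = `|c| * N v
    & forall u v, N (u + v) <= N u + N v].

Fixpoint fwd (A : nat -> 'M[R]_d) (n k : nat) : 'M[R]_d :=
  if k is k'.+1 then A (n + k')%N *m fwd A n k' else 1%:M.

Fixpoint bwd (A : nat -> 'M[R]_d) (m k : nat) : 'M[R]_d :=
  if k is k'.+1 then bwd A m k' *m invmx (A (m + k')%N) else 1%:M.

Definition cocycle (A : nat -> 'M[R]_d) (m n : nat) : 'M[R]_d :=
  if (n <= m)%N then fwd A n (m - n) else bwd A m (n - m).

Definition Sr (A : nat -> 'M[R]_d) (N : nat -> 'cV[R]_d -> R) (r : R) (n : nat)
  : set 'cV[R]_d :=
  [set v | exists C : R, forall m : nat, (n <= m)%N ->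
      r ^- (m - n) * N m (cocycle A m n *m v) <= C].

Definition strong_exp_dichotomy (C : nat -> 'M[R]_d) (N : nat -> 'cV[R]_d -> R)
  : Prop :=
  exists (K a lam : R) (P : nat -> 'M[R]_d),
    [/\ 0 < K /\ 0 < lam /\ lam <= a,
        forall n, P n *m P n = P n,
        forall n, C n *m P n = P n.+1 *m C n &
        forall (m n : nat) (x : 'cV[R]_d), (n <= m)%N ->
          [/\ N m (cocycle C m n *m (P n *m x))
                <= K * expR (- lam * (m - n)%:R) * N n x,
              N n (cocycle C n m *m ((1%:M - P m) *m x))
                <= K * expR (- lam * (m - n)%:R) * N m x,
              N m (cocycle C m n *m x) <= K * expR (a * (m - n)%:R) * N n x &
              N n (cocycle C n m *m x) <= K * expR (a * (m - n)%:R) * N m x]].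

Definition SigmaED (A : nat -> 'M[R]_d) (N : nat -> 'cV[R]_d -> R) : set R :=
  [set tau | 0 < tau /\ ~ strong_exp_dichotomy (fun n => tau^-1 *: A n) N].

End Defs.

(* Main.v *)
Require Import Defs.
From HB Require Import structures.
From mathcomp Require Import all_boot all_order all_algebra.
From mathcomp Require Import classical_sets reals sequences exp.
From mathcomp Require Import ring lra.
Import Order.TTheory GRing.Theory Num.Theory.
Local Open Scope ring_scope.
Local Open Scope classical_set_scope.
Set Implicit Arguments. Unset Strict Implicit. Unset Printing Implicit Defensive.

Section Aux.
Variables (R : realType) (d : nat).
Implicit Types (C : nat -> 'M[R]_d).

Lemma fwdZ C (s : R) n k :
  fwd (fun j => s *: C j) n k = s ^+ k *: fwd C n k.
Proof.
elim: k => [|k IH] /=; first by rewrite expr0 scale1r.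
by rewrite IH -scalemxAr -scalemxAl scalerA exprSr mulrC.
Qed.

Lemma bwdZ C (s : R) m k : s != 0 -> (forall j, C j \in unitmx) ->
  bwd (fun j => s *: C j) m k = (s^-1) ^+ k *: bwd C m k.
Proof.
move=> s0 CU; elim: k => [|k IH] /=; first by rewrite expr0 scale1r.
rewrite IH invmxZ; last by rewrite unitmxZ ?CU // unitfE.
by rewrite -scalemxAl -scalemxAr scalerA exprSr.
Qed.

Lemma cocycle_fwd C m n : (n <= m)%N -> cocycle C m n = fwd C n (m - n).
Proof. by rewrite /cocycle => ->. Qed.

Lemma cocycle_bwd C m n : (n <= m)%N -> cocycle C n m = bwd C n (m - n).
Proof.
rewrite /cocycle leq_eqVlt => /orP[/eqP->|nm]; first by rewrite leqnn subnn.
by rewrite leqNgt nm.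
Qed.

Lemma bwd_fwd C n k : (forall j, C j \in unitmx) ->
  bwd C n k *m fwd C n k = 1%:M.
Proof.
move=> CU; elim: k => [|k IH] /=; first by rewrite mulmx1.
by rewrite mulmxA -(mulmxA _ (invmx _)) mulVmx ?CU // mulmx1 IH.
Qed.

Lemma fwd_comm C (P : nat -> 'M[R]_d) n k :
  (forall j, C j *m P j = P j.+1 *m C j) ->
  fwd C n k *m P n = P (n + k)%N *m fwd C n k.
Proof.
move=> CP; elim: k => [|k IH] /=; first by rewrite addn0 mul1mx mulmx1.
by rewrite -mulmxA IH mulmxA CP addnS mulmxA.
Qed.




Lemma normZ' (N : 'cV[R]_d -> R) (q : R) (X : 'M[R]_d) v :
  is_norm N -> 0 <= q -> N ((q *: X) *m v) = q * N (X *m v).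
Proof. by case=> _ _ HZ _ q0; rewrite -scalemxAl HZ ger0_norm. Qed.

Lemma bounded_char C (N : nat -> 'cV[R]_d -> R) (K lam : R) (P : nat -> 'M[R]_d) n :
  (forall j, C j \in unitmx) -> (forall j, is_norm (N j)) ->
  0 < K -> 0 < lam -> (forall j, C j *m P j = P j.+1 *m C j) ->
  (forall (m n : nat) (x : 'cV[R]_d), (n <= m)%N ->
     N m (cocycle C m n *m (P n *m x)) <= K * expR (- lam * (m - n)%:R) * N n x /\
     N n (cocycle C n m *m ((1%:M - P m) *m x)) <= K * expR (- lam * (m - n)%:R) * N m x) ->
  [set v | exists B : R, forall m, (n <= m)%N -> N m (cocycle C m n *m v) <= B]
  = [set v | (1%:M - P n) *m v = 0].
Proof.
move=> CU NN K0 l0 CP H; apply/seteqP; split => v /=.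
- case=> B HB; set w := (1%:M - P n) *m v.
  have key : forall k : nat, N n w <= K * expR (- lam * k%:R) * B.
    move=> k; have := HB (n + k)%N (leq_addr k n).
    rewrite cocycle_fwd ?leq_addr // addKn => Hb.
    have [_ H2] := H (n + k)%N n (fwd C n k *m v) (leq_addr _ _).
    rewrite addKn cocycle_bwd ?leq_addr // addKn in H2.
    have -> : w = bwd C n k *m ((1%:M - P (n + k)%N) *m (fwd C n k *m v)).
      have e1 : (1%:M - P (n + k)%N) *m fwd C n k = fwd C n k *m (1%:M - P n).
        by rewrite mulmxBl mulmxBr mul1mx mulmx1 fwd_comm.
      rewrite (mulmxA (1%:M - _)) e1 -(mulmxA (fwd C n k)) -/w mulmxA bwd_fwd //.
      by rewrite mul1mx.
    apply: le_trans H2 _; apply: ler_wpM2l => //.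
    by rewrite mulr_ge0 ?expR_ge0 ?ltW.
  have B0 : 0 <= B.
    apply: le_trans (HB n (leqnn n)); by case: (NN n).
  case: (NN n) => Nge0 Ndef _ _; apply: Ndef; apply/eqP; rewrite eq_le Nge0 andbT.
  rewrite leNgt; apply/negP => y0.
  set y := N n w in y0 key.
  pose k := Num.bound (K * B / (lam * y)).
  have kb : K * B / (lam * y) < k%:R 
    by apply: archi_boundP; apply: divr_ge0; apply: mulr_ge0 => //; lra.
  have kb' : K * B < k%:R * (lam * y).
    by rewrite -ltr_pdivrMr ?mulr_gt0.
  have E1 := expR_ge1Dx (lam * k%:R).
  have Hk : y * expR (lam * k%:R) <= K * B.
    have := key k; rewrite mulNr expRN mulrAC => h.
    by rewrite -ler_pdivlMr ?expR_gt0.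
  nra.
- move=> Hv; exists (K * N n v) => m nm.
  have e : v = P n *m v.
    by apply/eqP; rewrite -subr_eq0 -{1}[v]mul1mx -mulmxBl Hv.
  rewrite {1}e.
  have [H1 _] := H m n v nm; apply: le_trans H1 _.
  rewrite -mulrA; apply: ler_wpM2l; first lra.
  apply: ler_piMl; first by case: (NN n).
  by rewrite expR_le1 mulNr oppr_le0 mulr_ge0 // ltW.
Qed.


Definition SEDd C (N : nat -> 'cV[R]_d -> R) (K a lam : R) (P : nat -> 'M[R]_d) :=
    [/\ 0 < K /\ 0 < lam /\ lam <= a,
        forall n, P n *m P n = P n,
        forall n, C n *m P n = P n.+1 *m C n &
        forall (m n : nat) (x : 'cV[R]_d), (n <= m)%N ->
          [/\ N m (cocycle C m n *m (P n *m x))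
                <= K * expR (- lam * (m - n)%:R) * N n x,
              N n (cocycle C n m *m ((1%:M - P m) *m x))
                <= K * expR (- lam * (m - n)%:R) * N m x,
              N m (cocycle C m n *m x) <= K * expR (a * (m - n)%:R) * N n x &
              N n (cocycle C n m *m x) <= K * expR (a * (m - n)%:R) * N m x]].

Lemma SEDdP C N : strong_exp_dichotomy C N <-> exists K a lam P, SEDd C N K a lam P.
Proof. by []. Qed.

Lemma key_ineq (q delta K M E x y : R) (k : nat) :
  0 <= q -> q <= expR delta -> 0 <= K -> 0 <= M -> 0 <= E -> x + delta <= y ->
  E <= K * expR (x * k%:R) * M -> q ^+ k * E <= K * expR (y * k%:R) * M.
Proof.
move=> q0 qd K0 M0 E0 xy HE.
have qk : q ^+ k <= expR (delta * k%:R).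
  by rewrite expRM_natr; apply: lerXn2r => //; rewrite nnegrE ?expR_ge0.
apply: (@le_trans _ _ (expR (delta * k%:R) * (K * expR (x * k%:R) * M))).
  by apply: ler_pM => //; rewrite exprn_ge0.
have -> : expR (delta * k%:R) * (K * expR (x * k%:R) * M) = K * expR ((x + delta) * k%:R) * M.
  by rewrite mulrDl expRD; ring.
apply: ler_wpM2r => //; apply: ler_wpM2l => //.
by rewrite ler_expR ler_wpM2r.
Qed.

Lemma SED_scale C N K a lam P (c delta : R) :
  (forall j, C j \in unitmx) -> (forall j, is_norm (N j)) ->
  0 < c -> 0 <= delta -> delta < lam -> c <= expR delta -> c^-1 <= expR delta ->
  SEDd C N K a lam P -> SEDd (fun j => c *: C j) N K (a + delta) (lam - delta) P.
Proof.
move=> CU NN c0 d0 dl cd cd' [[K0 [l0 la]] PP CP H]; split => //.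
- split => //; split; lra.
- by move=> n; rewrite -scalemxAl CP scalemxAr.
move=> m n x nm.
have ef : cocycle (fun j => c *: C j) m n = c ^+ (m - n) *: cocycle C m n.
  by rewrite !cocycle_fwd // fwdZ.
have eb : cocycle (fun j => c *: C j) n m = c^-1 ^+ (m - n) *: cocycle C n m.
  by rewrite !cocycle_bwd // bwdZ // gt_eqF.
have c0' : 0 <= c by lra.
have ci0 : 0 <= c^-1 by rewrite invr_ge0.
have Nm0 : forall j y, 0 <= N j y by move=> j y; case: (NN j).
have [H1 H2 H3 H4] := H m n x nm.
rewrite ef eb !normZ' ?exprn_ge0 //; split.
- by apply: (key_ineq (delta:=delta)) H1 => //; lra.
- by apply: (key_ineq (delta:=delta)) H2 => //; lra.
- by apply: (key_ineq (delta:=delta)) H3 => //; lra.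
- by apply: (key_ineq (delta:=delta)) H4 => //; lra.
Qed.

Lemma bounded_of_SEDd C N K a lam P n :
  (forall j, C j \in unitmx) -> (forall j, is_norm (N j)) -> SEDd C N K a lam P ->
  [set v | exists B : R, forall m, (n <= m)%N -> N m (cocycle C m n *m v) <= B]
  = [set v | (1%:M - P n) *m v = 0].
Proof.
move=> CU NN [[K0 [l0 _]] _ CP H]; apply: (bounded_char (K:=K) (lam:=lam)) => //.
by move=> m k x km; have [h1 h2 _ _] := H m k x km.
Qed.

Lemma Sr_scale A N r n : (forall j, is_norm (N j)) -> 0 < r ->
  Sr A N r n = [set v : 'cV[R]_d | exists B : R, forall m, (n <= m)%N ->
     N m (cocycle (fun j => r^-1 *: A j) m n *m v) <= B].
Proof.
move=> NN r0.
have e v m : (n <= m)%N -> r ^- (m - n) * N m (cocycle A m n *m v) =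
    N m (cocycle (fun j => r^-1 *: A j) m n *m v).
  by move=> nm; rewrite !cocycle_fwd // fwdZ normZ' // ?exprn_ge0 ?invr_ge0 ?ltW // exprVn.
apply/seteqP; split=> v [B HB]; exists B => m nm; [rewrite -e // | rewrite e //]; exact: HB.
Qed.

Lemma open_step A N r K a lam P r' :
  (forall j, A j \in unitmx) -> (forall j, is_norm (N j)) -> 0 < r ->
  SEDd (fun j => r^-1 *: A j) N K a lam P ->
  r * expR (- (lam / 2)) < r' -> r' < r * expR (lam / 2) ->
  SEDd (fun j => r'^-1 *: A j) N K (a + lam / 2) (lam - lam / 2) P.
Proof.
move=> AU NN r0 HS hb hc.
have l0 : 0 < lam by case: HS => -[_ []].
have r'0 : 0 < r' by apply: lt_trans hb; rewrite mulr_gt0 ?expR_gt0.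
have -> : (fun j => r'^-1 *: A j) = (fun j => (r / r') *: (r^-1 *: A j)).
  apply: boolp.funext => j /=; rewrite scalerA; congr (_ *: _).
  by field; apply/andP; split; rewrite gt_eqF.
have E0 := expR_gt0 (lam / 2).
apply: SED_scale HS => //.
- by move=> j; rewrite unitmxZ ?AU // unitfE invr_eq0 gt_eqF.
- by rewrite divr_gt0.
- lra.
- lra.
- rewrite ler_pdivrMr //; move: hb; rewrite expRN => hb.
  rewrite -(ltr_pM2r E0) -mulrA mulVf ?gt_eqF // mulr1 in hb.
  rewrite mulrC; exact: ltW.
- rewrite invf_div ler_pdivrMr //; rewrite mulrC; exact: ltW.
Qed.

End Aux.

Theorem lemma7p3 (R : realType) (d : nat) (A : nat -> 'M[R]_d)
  (N : nat -> 'cV[R]_d -> R) :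
  (forall n, A n \in unitmx) ->
  (forall n, is_norm (N n)) ->
  (exists K a : R, [/\ 0 < K, 0 < a &
     forall (m n : nat) (x : 'cV[R]_d), (n <= m)%N ->
       N m (cocycle A m n *m x) <= K * expR (a * (m - n)%:R) * N n x /\
       N n (cocycle A n m *m x) <= K * expR (a * (m - n)%:R) * N m x]) ->
  (* Sigma is closed in (0, +oo) *)
  (forall tau : R, 0 < tau ->
     (forall eps : R, 0 < eps ->
        exists2 s, SigmaED A N s & `|s - tau| < eps) ->
     SigmaED A N tau) /\
  (* local constancy of S_r(n) off Sigma *)
  (forall r : R, 0 < r -> ~ SigmaED A N r ->
     exists b c : R, [/\ 0 < b, b < r, r < c &
       forall (n : nat) (r' : R), b < r' -> r' < c -> Sr A N r n = Sr A N r' n]).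
Proof.
move=> AU NN _.
have SED_of r : 0 < r -> ~ SigmaED A N r ->
    exists K a lam P, SEDd (fun j => r^-1 *: A j) N K a lam P.
  move=> r0 Hn; apply/SEDdP; apply: boolp.contrapT => H'; apply: Hn; by split.
have bc (r lam : R) : 0 < r -> 0 < lam ->
    [/\ 0 < r * expR (- (lam / 2)), r * expR (- (lam / 2)) < r & r < r * expR (lam / 2)].
  move=> r0 l0; split; first by rewrite mulr_gt0 ?expR_gt0.
  - by rewrite gtr_pMr // expR_lt1; lra.
  - by rewrite ltr_pMr // expR_gt1; lra.
split.
- move=> tau t0 Hcl; apply: boolp.contrapT => Hn.
  have [K [a [lam [P HS]]]] := SED_of tau t0 Hn.
  have l0 : 0 < lam by case: HS => -[_ []].
  have [b0 btau tauc] := bc tau lam t0 l0.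
  set b := tau * expR (- (lam / 2)) in b0 btau tauc.
  set c := tau * expR (lam / 2) in tauc.
  have epos : 0 < Num.min (tau - b) (c - tau) by rewrite lt_min; apply/andP; split; lra.
  have [s [s0 Hs] hs] := Hcl _ epos.
  have m1 : Num.min (tau - b) (c - tau) <= tau - b by rewrite ge_min lexx.
  move: hs; rewrite ltr_norml lt_min => /andP[h1 /andP[h3 h4]].
  apply: Hs; apply/SEDdP; do 4 eexists; apply: (open_step AU NN t0 HS); rewrite -/b -/c; lra.
- move=> r r0 Hn.
  have [K [a [lam [P HS]]]] := SED_of r r0 Hn.
  have l0 : 0 < lam by case: HS => -[_ []].
  have [b0 br rc] := bc r lam r0 l0.
  exists (r * expR (- (lam / 2))), (r * expR (lam / 2)); split => // n r' hb hc.
  have r'0 : 0 < r' by lra.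
  have UU (t : R) : 0 < t -> forall j, t^-1 *: A j \in unitmx.
    by move=> t0 j; rewrite unitmxZ ?AU // unitfE invr_eq0 gt_eqF.
  rewrite !Sr_scale // (bounded_of_SEDd n (UU r r0) NN HS).
  by rewrite (bounded_of_SEDd n (UU r' r'0) NN (open_step AU NN r0 HS hb hc)).
Qed.
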